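(* Let $G$ be a non-complete double-critical $k$-chromatic graph. If $H$ is a connected subgraph of $G$ with at least $2$ vertices, then the graph $G/V(H)$ obtained from $G$ by contracting $V(H)$ into a single vertex is $(k-1)$-colourable.
   Context: All graphs are finite and simple. A graph $G$ is (vertex-)critical if $\chi(G-v)<\chi(G)$ for every vertex $v\in V(G)$. A critical graph $G$ is double-critical if $\chi(G-x-y)\le\chi(G)-2$ for every edge $xy\in E(G)$. For $U\subseteq V(G)$ with $G[U]$ connected, $G/U$ denotes the graph obtained from $G$ by contracting $U$ into one vertex (resulting in a simple graph). *)

(* Defs.v *)
From mathcomp Require Import all_boot.
Set Implicit Arguments. Unset Strict Implicit. Unset Printing Implicit Defensive.

Definition simple_graph (T : finType) (e : rel T) : Prop :=
  symmetric e /\ irreflexive e.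

Definition colourable (T : finType) (e : rel T) (S : {set T}) (k : nat) : bool :=
  [exists f : {ffun T -> 'I_k},
     [forall x in S, forall y in S, e x y ==> (f x != f y)]].

(* chromatic number of G[S]: least k such that G[S] is k-colourable
   (G[S] is always #|S|-colourable, so the default #|S| is never spurious) *)
Definition chi (T : finType) (e : rel T) (S : {set T}) : nat :=
  \big[minn/#|S|]_(k < #|S|.+1 | colourable e S k) (k : nat).

Definition critical (T : finType) (e : rel T) : Prop :=
  forall v : T, chi e ([set: T] :\ v) < chi e [set: T].

Definition double_critical (T : finType) (e : rel T) : Prop :=
  critical e /\
  forall x y : T, e x y -> chi e ([set: T] :\ x :\ y) <= chi e [set: T] - 2.

Definition complete (T : finType) (e : rel T) : Prop :=
  forall x y : T, x != y -> e x y.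

Definition subgraph (T : finType) (e : rel T) (U : {set T}) (h : rel T) : Prop :=
  forall x y, h x y -> [/\ e x y, x \in U & y \in U].

Definition connected_graph (T : finType) (U : {set T}) (h : rel T) : Prop :=
  forall x y, x \in U -> y \in U ->
    connect [rel a b | [&& h a b, a \in U & b \in U]] x y.

(* G/U : vertices are None (the contracted vertex) and Some x for x \notin U. *)
Definition contract_vertices (T : finType) (U : {set T}) : {set option T} :=
  None |: [set Some x | x in ~: U].

Definition contract_rel (T : finType) (e : rel T) (U : {set T}) : rel (option T) :=
  fun a b =>
    match a, b with
    | Some x, Some y => [&& e x y, x \notin U & y \notin U]
    | None, Some y => (y \notin U) && [exists u in U, e u y]
    | Some x, None => (x \notin U) && [exists u in U, e u x]
    | None, None => false
    end.

(* Main.v *)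
Require Import Defs.
From mathcomp Require Import all_boot.
Set Implicit Arguments. Unset Strict Implicit. Unset Printing Implicit Defensive.

Lemma chi_ge2 (T : finType) (e : rel T) (S : {set T}) x y :
  x \in S -> y \in S -> x != y -> e x y -> 2 <= chi e S.
Proof.
move=> xS yS nxy exy; rewrite /chi.
apply: (big_ind (fun n => 2 <= n)).
- by apply/card_gt1P; exists x, y.
- by move=> a b Ha Hb; rewrite leq_min Ha Hb.
move=> [i _] /= /existsP [f /forall_inP Hf].
have := Hf x xS => /forall_inP /(_ y yS) /implyP /(_ exy).
case: i f {Hf} => [|[|i]] //= f.
- by case: (f x).
- by case: (f x) => [[|]] //; case: (f y) => [[|]].
Qed.

Lemma chi_col (T : finType) (e : rel T) (S : {set T}) :
  irreflexive e ->
  exists f : T -> nat, (forall x, x \in S -> f x < chi e S) /\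
    (forall x y, x \in S -> y \in S -> e x y -> f x != f y).
Proof.
move=> irr; rewrite /chi.
apply: (big_ind (fun n => exists f : T -> nat, (forall x, x \in S -> f x < n) /\
    (forall x y, x \in S -> y \in S -> e x y -> f x != f y))).
- exists (fun x => index x (enum S)); split.
  + by move=> x xS; rewrite cardE index_mem mem_enum.
  + move=> x y xS yS exy; apply/negP=> /eqP H.
    have xy : x = y by apply: (@index_inj _ x (enum S) x y); rewrite ?mem_enum.
    by subst y; rewrite irr in exy.
- move=> a b [fa [Ha Ha']] [fb [Hb Hb']].
  case: (leqP a b) => ab /=.
  + by exists fa.
  + by exists fb.
move=> [i _] /= /existsP [f /forall_inP Hf].
exists (fun x => val (f x)); split => [x _|x y xS yS exy]; first exact: ltn_ord.
by have := Hf x xS => /forall_inP /(_ y yS) /implyP /(_ exy).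
Qed.

Theorem proposition3 (T : finType) (e : rel T) (k : nat)
  (Hsimple : simple_graph e)
  (Hnc : ~ complete e)
  (Hdc : double_critical e)
  (Hk : chi e [set: T] = k)
  (U : {set T}) (h : rel T)
  (Hsub : subgraph e U h)
  (Hconn : connected_graph U h)
  (H2 : 2 <= #|U|) :
  colourable (contract_rel e U) (contract_vertices U) k.-1.
Proof.
case: Hsimple => _ irr.
have [x [y [xU yU exy]]] : exists x y, [/\ x \in U, y \in U & e x y].
  have /card_gt1P [a [b [aU bU nab]]] := H2.
  have /connectP [p Hp Hb] := Hconn a b aU bU.
  case: p Hp Hb => [|c p] /=; first by move=> _ Hb; rewrite Hb eqxx in nab.
  move=> /andP [/and3P [hac _ _] _] _.
  have [eac _ cU] := Hsub _ _ hac.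
  by exists a, c.
have nxy : x != y by apply/negP => /eqP xy; subst y; rewrite irr in exy.
have k2 : 2 <= k by rewrite -Hk; apply: (chi_ge2 (x:=x) (y:=y)); rewrite ?inE.
have Hle := (Hdc.2 x y exy); rewrite Hk in Hle.
have [f [Hf1 Hf2]] := chi_col ([set: T] :\ x :\ y) irr.
case: k k2 Hk Hle => [|[|n]] // _ _ Hle.
rewrite /= subn2 /= in Hle *.
apply/existsP.
exists [ffun o : option T => (inord (match o with None => n | Some z => f z end) : 'I_n.+1)].
have fS z : z \notin U -> z \in [set: T] :\ x :\ y.
  move=> zU; rewrite !inE andbT; apply/andP; split.
  - by apply: contraNneq zU => ->.
  - by apply: contraNneq zU => ->.
have fl z : z \notin U -> f z < n by move=> zU; apply: leq_trans (Hf1 z (fS z zU)) Hle.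
apply/forall_inP => a Ha; apply/forall_inP => b Hb; apply/implyP => eab.
rewrite !ffunE.
have inj u v : u <= n -> v <= n -> u != v -> (inord u : 'I_n.+1) != inord v.
  move=> un vn; apply: contra => /eqP H.
  by move/(f_equal (@nat_of_ord _)): H; rewrite !inordK // => ->.
have fl' z : z \notin U -> f z <= n by move=> zU; apply: ltnW; apply: fl.
case: a b Ha Hb eab => [a|] [b|] //= Ha Hb.
- case/and3P => eab aU bU.
  apply: inj; [exact: fl' | exact: fl' |].
  by apply: Hf2 => //; apply: fS.
- case/andP => aU _; apply: inj => //; first exact: fl'.
  by rewrite neq_ltn fl.
- case/andP => bU _; apply: inj => //; first exact: fl'.
  by rewrite neq_ltn fl ?orbT.
Qed.
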